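(* Let $\alpha\in[1,2]$, $n,m\ge1$, let $\omega=(\omega_1,\dots,\omega_n)$ be a weight vector with $\omega_j\ge0$, $\sum_j\omega_j=1$, and let $\rho_1,\dots,\rho_n$ be $m\times m$ density matrices. Then $$D_\alpha^\omega(\rho_1,\dots,\rho_n)\le H_\alpha(\omega),$$ where for $\alpha\neq1$, $H_\alpha(\omega)=\frac{1}{1-\alpha}\bigl(\sum_{j=1}^n\omega_j^\alpha-1\bigr)$ is the Tsallis entropy of $\omega$, and for $\alpha=1$, $H_1(\omega)=-\sum_j\omega_j\log\omega_j$ is its Shannon entropy (equivalently, $H_\alpha(\omega)=H_\alpha(\mathrm{diag}(\omega_1,\dots,\omega_n))$).
   Context: An $m\times m$ density matrix is a real symmetric positive semidefinite $m\times m$ matrix with trace $1$. For $\alpha\in(0,1)\cup(1,\infty)$, the quantum Tsallis entropy is $H_\alpha(\rho)=\frac{1}{1-\alpha}\bigl(\mathrm{tr}(\rho^\alpha)-1\bigr)$ ($\rho^\alpha$ via spectral decomposition); for $\alpha=1$, $H_1(\rho)=-\mathrm{tr}(\rho\log\rho)$ is the von Neumann entropy (with $0\log0=0$). The quantum Jensen–Tsallis divergence of density matrices $\rho_1,\dots,\rho_n$ with weights $\omega$ is $$D_\alpha^{\omega}(\rho_1,\dots,\rho_n)=H_\alpha\Bigl(\sum_{j=1}^n\omega_j\rho_j\Bigr)-\sum_{j=1}^n\omega_jH_\alpha(\rho_j).$$ *)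

(* Defs.v *)
(* classical reals (Rpower, ln). Matrices are nat -> nat -> R,
   only entries with indices < m are meaningful. *)
From Stdlib Require Import Reals Lra ClassicalEpsilon.
Open Scope R_scope.

Definition mat := nat -> nat -> R.

Fixpoint rsum (n : nat) (f : nat -> R) : R :=
  match n with
  | O => 0
  | S k => rsum k f + f k
  end.

Definition mtrace (m : nat) (A : mat) : R := rsum m (fun i => A i i).

Definition symmetric (m : nat) (A : mat) : Prop :=
  forall i j, (i < m)%nat -> (j < m)%nat -> A i j = A j i.

Definition psd (m : nat) (A : mat) : Prop :=
  forall x : nat -> R,
    0 <= rsum m (fun i => x i * rsum m (fun j => A i j * x j)).

Definition density (m : nat) (A : mat) : Prop :=
  symmetric m A /\ psd m A /\ mtrace m A = 1.

Definition orthogonal (m : nat) (U : mat) : Prop :=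
  forall i j, (i < m)%nat -> (j < m)%nat ->
    rsum m (fun k => U k i * U k j) = if Nat.eqb i j then 1 else 0.

Definition spectral_decomp (m : nat) (A : mat) (U : mat) (lam : nat -> R) : Prop :=
  orthogonal m U /\
  forall i j, (i < m)%nat -> (j < m)%nat ->
    A i j = rsum m (fun k => U i k * lam k * U j k).

Definition trace_fun (m : nat) (f : R -> R) (A : mat) : R :=
  epsilon (inhabits 0)
    (fun t => exists U lam, spectral_decomp m A U lam /\
                            t = rsum m (fun k => f (lam k))).

(* x^a for x >= 0, a > 0, with 0^a = 0 *)
Definition rpow (x a : R) : R := if Rlt_dec 0 x then Rpower x a else 0.

(* x log x with 0 log 0 = 0 (natural log) *)
Definition xlogx (x : R) : R := if Rlt_dec 0 x then x * ln x else 0.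

Definition tsallis_mat (alpha : R) (m : nat) (rho : mat) : R :=
  if Req_dec_T alpha 1 then - trace_fun m xlogx rho
  else (trace_fun m (fun x => rpow x alpha) rho - 1) / (1 - alpha).

Definition tsallis_vec (alpha : R) (n : nat) (w : nat -> R) : R :=
  if Req_dec_T alpha 1 then - rsum n (fun j => xlogx (w j))
  else (rsum n (fun j => rpow (w j) alpha) - 1) / (1 - alpha).

Definition mixture (n : nat) (w : nat -> R) (rho : nat -> mat) : mat :=
  fun i j => rsum n (fun k => w k * rho k i j).

Definition jt_div (alpha : R) (n m : nat) (w : nat -> R) (rho : nat -> mat) : R :=
  tsallis_mat alpha m (mixture n w rho)
  - rsum n (fun j => w j * tsallis_mat alpha m (rho j)).

(* Main.v *)
Require Import Defs.
From Stdlib Require Import Reals Lra Lia Psatz ClassicalEpsilon.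
From HB Require Import structures.
From mathcomp Require all_boot all_order all_algebra complex spectral sesquilinear ring lra Rstruct.

Module MC.
Import all_boot all_order all_algebra complex spectral sesquilinear ring lra Rstruct.
Set Implicit Arguments. Unset Strict Implicit. Unset Printing Implicit Defensive.
Import Order.TTheory GRing.Theory Num.Theory.
Local Open Scope ring_scope.
Section Eig.
Variable R : rcfType.

Lemma real_eigen n (A : 'M[R]_n.+1) : A^T = A ->
  exists a : R, exists2 v : 'rV_n.+1, v *m A = a *: v & v != 0.
Proof.
move=> sA.
pose Ac := map_mx (real_complex R) A.
have Ahs : Ac \is hermsymmx.
  apply: realsym_hermsym.
    apply/is_hermitianmxP; rewrite expr0 scale1r /=.
    rewrite map_mx_id //=. by rewrite map_trmx sA.
  by apply/mxOverP => i j; rewrite mxE; apply/complex_realP; exists (A i j).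
have dreal := hermitian_spectral_diag_real Ahs.
have /orthomx_spectralP Aeq := hermitian_normalmx Ahs.
set P := spectralmx Ac in Aeq.
set d := spectral_diag Ac in Aeq dreal.
have Pu : P \in unitmx := spectral_unit Ac.
have ev : eigenvalue Ac (d 0 0).
  apply/eigenvalueP; exists (row 0 P).
    rewrite -row_mul.
    have -> : P *m Ac = diag_mx d *m P by rewrite {1}Aeq !mulmxA mulmxV // mul1mx.
    rewrite row_mul row_diag_mx.
    by rewrite -scalemxAl -rowE.
  apply/negP => /eqP r0.
  move: Pu; rewrite unitmxE unitfE.
  rewrite (expand_det_row _ 0) big1 ?eqxx // => j _.
  by have := congr1 (fun M : 'M_(1, n.+1) => M 0 j) r0; rewrite !mxE => ->; rewrite mul0r.
have dr : (d 0 0) \is Num.real by move/mxOverP: dreal => /(_ 0 0).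
exists (complex.Re (d 0 0)).
apply/eigenvalueP.
have E : d 0 0 = real_complex R (complex.Re (d 0 0)) by rewrite RRe_real.
move: ev; rewrite E eigenvalue_root_char -map_char_poly fmorph_root.
by rewrite -eigenvalue_root_char.
Qed.

Lemma householder k (u : 'rV[R]_k.+1) : u *m u^T = 1%:M ->
  exists H : 'M[R]_k.+1, [/\ H^T = H, H *m H = 1%:M & delta_mx 0 0 *m H = u].
Proof.
move=> uu.
set e : 'rV[R]_k.+1 := delta_mx 0 0.
have ee : e *m e^T = 1%:M by rewrite trmx_delta mul_delta_mx; apply/matrixP => i j; rewrite !ord1 !mxE.
have [ue|une] := eqVneq u e.
  by exists 1%:M; split; rewrite ?trmx1 ?mulmx1 ?mul1mx ?ue.
set w := u - e.
set s := (w *m w^T) 0 0.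
have ws : w *m w^T = s%:M by rewrite {1}[w *m w^T]mx11_scalar.
have eu : (e *m u^T) = (u *m e^T) by apply/matrixP => i j; rewrite !ord1 !mxE; apply: eq_bigr => l _; rewrite !mxE mulrC.
set t := (u *m e^T) 0 0.
have ut : u *m e^T = t%:M by rewrite {1}[u *m e^T]mx11_scalar.
have s2 : s = 2 - 2 * t.
  have := ws; rewrite /w linearB /= mulmxBl !mulmxBr uu ee eu ut.
  move/matrixP=> /(_ 0 0); rewrite !mxE /= !mulr1n => <-; ring.
have s0 : s != 0.
  apply: contra une => /eqP s0.
  have : \sum_j (w 0 j)^+2 == 0.
    have -> : \sum_j (w 0 j)^+2 = s.
      by rewrite /s mxE; apply: eq_bigr => j _; rewrite [w^T _ _]mxE expr2.
    by apply/eqP.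
  rewrite psumr_eq0 /=; last by move=> j _; rewrite sqr_ge0.
  move=> /allP H; rewrite -subr_eq0; apply/eqP/matrixP => i j; rewrite ord1.
  by have := H j (mem_index_enum j); rewrite sqrf_eq0 [RHS]mxE => /eqP.
set W := w^T *m w.
have WW : W *m W = s *: W by rewrite /W mulmxA -[w^T *m w *m w^T]mulmxA ws mul_mx_scalar -scalemxAl.
exists (1%:M - (2 / s) *: W); split.
- by rewrite linearB /= trmx1 linearZ /= /W trmx_mul trmxK.
- rewrite mulmxBl !mulmxBr !mul1mx mulmx1 -!scalemxAl -!scalemxAr WW scalerA.
  rewrite scalerA.
  have -> : 2 / s * (2 / s) * s = 2 / s + 2 / s by field.
  rewrite scalerDl; set X := (2 / s) *: W.
  by rewrite opprB addrK subrK.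
- rewrite mulmxBr mulmx1 -scalemxAr /W mulmxA.
  have -> : e *m w^T = (t - 1)%:M by rewrite /w linearB /= mulmxBr ee eu ut raddfB.
  rewrite mul_scalar_mx scalerA.
  have -> : 2 / s * (t - 1) = - 1 by rewrite s2; field; rewrite -s2.
  by rewrite scaleN1r opprK /w addrC subrK.
Qed.

Lemma real_spectral n (A : 'M[R]_n) : A^T = A ->
  exists P : 'M[R]_n, exists d : 'rV[R]_n,
    P *m P^T = 1%:M /\ A = P^T *m diag_mx d *m P.
Proof.
elim: n A => [|n IH] A sA.
  exists 1%:M, 0; split; first by rewrite trmx1 mulmx1.
  by apply/matrixP => [[]].
have step : forall B : 'M[R]_(1 + n), B^T = B -> (exists a, row 0 B = a *: delta_mx 0 0) ->
   exists Q : 'M[R]_(1 + n), exists d : 'rV[R]_(1 + n),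
    Q *m Q^T = 1%:M /\ B = Q^T *m diag_mx d *m Q.
  move=> B sB [a rB].
  have rB' j : B 0 j = a * (j == 0)%:R.
    by have := congr1 (fun M : 'rV_(1+n) => M 0 j) rB; rewrite !mxE eqxx /= => ->; rewrite eq_sym.
  have l0 : lshift n (0 : 'I_1) = 0 by apply/val_inj.
  have ul : ulsubmx B = a%:M.
    apply/matrixP => p q; rewrite !ord1 !mxE.
    rewrite (_ : lshift n 0 = 0); last by apply/val_inj.
    by rewrite rB' eqxx mulr1n mulr1.
  have ur : ursubmx B = 0.
    apply/matrixP => p q; rewrite !ord1 !mxE.
    rewrite (_ : lshift n 0 = 0); last by apply/val_inj.
    rewrite rB'.
    have -> : (rshift 1 q == 0) = false by apply/negbTE; rewrite -val_eqE.
    by rewrite mulr0.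
  have dl : dlsubmx B = 0 by rewrite -sB -trmx_ursub ur trmx0.
  have sA' : (drsubmx B)^T = drsubmx B by rewrite trmx_drsub sB.
  have [P' [d' [PP' Aeq']]] := IH _ sA'.
  exists (block_mx 1%:M 0 0 P'), (row_mx a%:M d'); split.
    rewrite tr_block_mx !trmx0 trmx1 mulmx_block !mul1mx !mul0mx !mulmx0 !addr0 !add0r PP'.
    by rewrite -scalar_mx_block.
  rewrite -[B]submxK ul ur dl Aeq' diag_mx_row tr_block_mx !trmx0 trmx1 !mulmx_block.
  rewrite !mul1mx !mul0mx !mulmx0 !mulmx1 !addr0 !add0r.
  rewrite mul0mx; congr block_mx.
  by apply/matrixP => p q; rewrite !ord1 !mxE.
have [a [v vA vn0]] := real_eigen sA.
set c := (v *m v^T) 0 0.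
have c0 : 0 < c.
  have : \sum_j (v 0 j)^+2 = c by rewrite /c mxE; apply: eq_bigr => j _; rewrite [v^T _ _]mxE expr2.
  move=> <-; rewrite lt_def psumr_eq0 /=; last by move=> j _; rewrite sqr_ge0.
  rewrite sumr_ge0 ?andbT; last by move=> j _; rewrite sqr_ge0.
  apply: contra vn0 => /allP H; apply/eqP/matrixP => p q; rewrite ord1 [RHS]mxE.
  by have := H q (mem_index_enum q); rewrite sqrf_eq0 => /eqP.
set u := (Num.sqrt c)^-1 *: v.
have uu : u *m u^T = 1%:M.
  rewrite /u linearZ /= -scalemxAl -scalemxAr scalerA -expr2 exprVn sqr_sqrtr ?ltW //.
  rewrite {1}[v *m v^T]mx11_scalar -/c scale_scalar_mx mulVf //.
  by rewrite gt_eqF.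
have uA : u *m A = a *: u by rewrite /u -scalemxAl vA !scalerA mulrC.
have [H [sH HH eH]] := householder uu.
set B := H *m A *m H.
have sB : B^T = B by rewrite /B !trmx_mul sA sH mulmxA.
have rB : exists a0, row 0 B = a0 *: delta_mx 0 0.
  exists a; rewrite rowE /B !mulmxA eH uA -scalemxAl -eH -mulmxA HH mulmx1.
  by [].
have [Q [d [QQ Beq]]] := step B sB rB.
exists (Q *m H), d; split.
  by rewrite trmx_mul sH mulmxA -(mulmxA Q) HH mulmx1 QQ.
have -> : A = H *m B *m H by rewrite /B !mulmxA HH mul1mx -mulmxA HH mulmx1.
by rewrite Beq trmx_mul sH !mulmxA.
Qed.
End Eig.

Lemma rsum_big n (f : nat -> R) : rsum n f = \sum_(i < n) f i.
Proof.
elim: n => [|n IH]; first by rewrite big_ord0.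
by rewrite big_ord_recr /= -IH.
Qed.

Lemma spectral_exists m (A : mat) : Defs.symmetric m A -> exists U lam, Defs.spectral_decomp m A U lam.
Proof.
case: m => [|m] sA.
  exists (fun _ _ => 0%R), (fun _ => 0%R); split => i j hi; exfalso; exact: (Nat.nlt_0_r _ hi).
pose M := \matrix_(i < m.+1, j < m.+1) A i j.
have sM : M^T = M.
  by apply/matrixP => i j; rewrite !mxE; apply: sA; apply/ssrnat.ltP.
have [P [d [PP Meq]]] := real_spectral sM.
exists (fun i k => P (inord k) (inord i)), (fun k => d 0 (inord k)); split.
  move=> i j /ssrnat.ltP hi /ssrnat.ltP hj.
  rewrite rsum_big.
  have := congr1 (fun X : 'M_m.+1 => X (inord i) (inord j)) PP.
  rewrite !mxE => E.
  have -> : \sum_(k < m.+1) P (inord i) (inord k) * P (inord j) (inord k) =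
            \sum_(k < m.+1) P (inord i) k * P^T k (inord j).
    by apply: eq_bigr => k _; rewrite inord_val mxE.
  rewrite E.
  case: (Nat.eqb_spec i j) => [->|hij]; first by rewrite eqxx.
  rewrite (_ : (inord i == inord j :> 'I_m.+1) = false) //.
  apply/negbTE/eqP => /(congr1 val) /=; rewrite !inordK //.
move=> i0 j0 /ssrnat.ltP hi /ssrnat.ltP hj.
rewrite mul_mx_diag in Meq.
have := congr1 (fun X : 'M_m.+1 => X (inord i0) (inord j0)) Meq.
rewrite !mxE !inordK // => ->.
rewrite rsum_big; apply: eq_bigr => k _; rewrite inord_val.
by rewrite !mxE.
Qed.
End MC.

Open Scope R_scope.

Lemma rsum_ext n f g : (forall k, (k < n)%nat -> f k = g k) -> rsum n f = rsum n g.
Proof.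
  induction n; intros H; simpl; auto.
  rewrite IHn by (intros; apply H; lia). rewrite H by lia. reflexivity.
Qed.

Lemma rsum_plus n f g : rsum n (fun k => f k + g k) = rsum n f + rsum n g.
Proof. induction n; simpl; [lra|]. rewrite IHn; lra. Qed.

Lemma rsum_minus n f g : rsum n (fun k => f k - g k) = rsum n f - rsum n g.
Proof. induction n; simpl; [lra|]. rewrite IHn; lra. Qed.

Lemma rsum_scal n c f : rsum n (fun k => c * f k) = c * rsum n f.
Proof. induction n; simpl; [lra|]. rewrite IHn; lra. Qed.

Lemma rsum_scal_r n c f : rsum n (fun k => f k * c) = rsum n f * c.
Proof. induction n; simpl; [lra|]. rewrite IHn; lra. Qed.

Lemma rsum_zero n f : (forall k, (k < n)%nat -> f k = 0) -> rsum n f = 0.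
Proof.
  intros H; rewrite (rsum_ext n f (fun _ => 0)) by auto.
  induction n; simpl; [lra|]. rewrite IHn by (intros; apply H; lia). lra.
Qed.

Lemma rsum_swap n m (f : nat -> nat -> R) :
  rsum n (fun i => rsum m (fun j => f i j)) = rsum m (fun j => rsum n (fun i => f i j)).
Proof.
  induction n; simpl.
  - symmetry; apply rsum_zero; auto.
  - rewrite IHn. rewrite <- rsum_plus. reflexivity.
Qed.

Lemma rsum_nonneg n f : (forall k, (k < n)%nat -> 0 <= f k) -> 0 <= rsum n f.
Proof.
  induction n; simpl; intros H; [lra|].
  assert (0 <= rsum n f) by (apply IHn; intros; apply H; lia).
  assert (0 <= f n) by (apply H; lia). lra.
Qed.

Lemma rsum_le n f g : (forall k, (k < n)%nat -> f k <= g k) -> rsum n f <= rsum n g.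
Proof.
  induction n; simpl; intros H; [lra|].
  assert (rsum n f <= rsum n g) by (apply IHn; intros; apply H; lia).
  assert (f n <= g n) by (apply H; lia). lra.
Qed.

Lemma rsum_ge_term n f l : (forall k, (k < n)%nat -> 0 <= f k) -> (l < n)%nat -> f l <= rsum n f.
Proof.
  induction n; simpl; intros H Hl; [lia|].
  destruct (Nat.eq_dec l n) as [->|Hne].
  - assert (0 <= rsum n f) by (apply rsum_nonneg; intros; apply H; lia). lra.
  - assert (f l <= rsum n f) by (apply IHn; [intros; apply H; lia| lia]).
    assert (0 <= f n) by (apply H; lia). lra.
Qed.

Lemma rsum_nonneg_eq0 n f l : (forall k, (k < n)%nat -> 0 <= f k) -> rsum n f = 0 ->
  (l < n)%nat -> f l = 0.
Proof.
  intros H Hs Hl.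
  assert (f l <= rsum n f) by (apply rsum_ge_term; auto).
  assert (0 <= f l) by auto. lra.
Qed.

Lemma rsum_single n f l : (l < n)%nat -> (forall k, (k < n)%nat -> k <> l -> f k = 0) ->
  rsum n f = f l.
Proof.
  induction n; simpl; intros Hl H; [lia|].
  destruct (Nat.eq_dec l n) as [->|Hne].
  - rewrite rsum_zero; [lra|]. intros k Hk; apply H; lia.
  - rewrite IHn by (auto; try lia; intros; apply H; lia). rewrite (H n) by lia. lra.
Qed.

Lemma rsum_delta n (f : nat -> R) l : (l < n)%nat ->
  rsum n (fun k => (if Nat.eqb l k then 1 else 0) * f k) = f l.
Proof.
  intros Hl. rewrite (rsum_single _ _ l Hl).
  - rewrite Nat.eqb_refl; lra.
  - intros k Hk Hne. destruct (Nat.eqb_spec l k); [lia|lra].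
Qed.

Lemma rsum_delta' n (f : nat -> R) l : (l < n)%nat ->
  rsum n (fun k => f k * (if Nat.eqb k l then 1 else 0)) = f l.
Proof.
  intros Hl. rewrite (rsum_single _ _ l Hl).
  - rewrite Nat.eqb_refl; lra.
  - intros k Hk Hne. destruct (Nat.eqb_spec k l); [lia|lra].
Qed.

Definition dot m (x y : nat -> R) := rsum m (fun a => x a * y a).
Definition quad m (A : mat) (y : nat -> R) := rsum m (fun a => y a * rsum m (fun b => A a b * y b)).
Definition col (U : mat) k := fun a => U a k.

Lemma dot_sym m x y : dot m x y = dot m y x.
Proof. unfold dot. apply rsum_ext; intros; ring. Qed.

Lemma quad_decomp m A U lam y : spectral_decomp m A U lam ->
  quad m A y = rsum m (fun k => lam k * (dot m y (col U k))^2).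
Proof.
  intros [_ HA]. unfold quad, dot, col.
  transitivity (rsum m (fun a => rsum m (fun b => rsum m (fun k => y a * U a k * lam k * U b k * y b)))).
  - apply rsum_ext; intros a Ha. rewrite <- rsum_scal. apply rsum_ext; intros b Hb.
    rewrite HA by auto. rewrite <- rsum_scal_r, <- rsum_scal. apply rsum_ext; intros; ring.
  - rewrite rsum_swap.
    transitivity (rsum m (fun b => rsum m (fun k => rsum m (fun a => y a * U a k * lam k * U b k * y b)))).
    + apply rsum_ext; intros b Hb. apply rsum_swap.
    + rewrite rsum_swap. apply rsum_ext; intros k Hk.
      rewrite rsum_swap.
      transitivity (rsum m (fun a => (y a * U a k * lam k) * rsum m (fun b => y b * U b k))).
      * apply rsum_ext; intros a Ha. rewrite <- rsum_scal. apply rsum_ext; intros; ring.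
      * rewrite rsum_scal_r. rewrite (rsum_scal_r m (lam k) (fun a => y a * U a k)). ring.
Qed.

Lemma quad_mixture n m w rho y :
  quad m (mixture n w rho) y = rsum n (fun j => w j * quad m (rho j) y).
Proof.
  unfold quad, mixture.
  transitivity (rsum m (fun a => rsum m (fun b => rsum n (fun j => w j * (y a * (rho j a b * y b)))))).
  - apply rsum_ext; intros a Ha. rewrite <- rsum_scal. apply rsum_ext; intros b Hb.
    rewrite <- rsum_scal_r, <- rsum_scal. apply rsum_ext; intros; ring.
  - transitivity (rsum m (fun a => rsum n (fun j => rsum m (fun b => w j * (y a * (rho j a b * y b)))))).
    + apply rsum_ext; intros a Ha. apply rsum_swap.
    + rewrite rsum_swap. apply rsum_ext; intros j Hj.
      rewrite <- rsum_scal. apply rsum_ext; intros a Ha.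
      rewrite <- rsum_scal, <- rsum_scal. apply rsum_ext; intros; ring.
Qed.

Lemma dot_orth m U l l' : orthogonal m U -> (l < m)%nat -> (l' < m)%nat ->
  dot m (col U l) (col U l') = if Nat.eqb l l' then 1 else 0.
Proof. intros H Hl Hl'. apply H; auto. Qed.

Lemma eigen_val m A U lam l : spectral_decomp m A U lam -> (l < m)%nat ->
  quad m A (col U l) = lam l.
Proof.
  intros HD Hl. rewrite (quad_decomp _ _ _ _ _ HD).
  rewrite (rsum_single _ _ l Hl).
  - rewrite dot_orth by (destruct HD; auto). rewrite Nat.eqb_refl. ring.
  - intros k Hk Hne. rewrite dot_orth by (destruct HD; auto).
    destruct (Nat.eqb_spec l k); [lia|]. ring.
Qed.

Lemma eigen_nonneg m A U lam l : spectral_decomp m A U lam -> psd m A -> (l < m)%nat -> 0 <= lam l.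
Proof. intros HD Hp Hl. rewrite <- (eigen_val _ _ _ _ _ HD Hl). apply Hp. Qed.

Lemma trace_decomp m A U lam : spectral_decomp m A U lam -> mtrace m A = rsum m lam.
Proof.
  intros HD. unfold mtrace. destruct HD as [HO HA].
  transitivity (rsum m (fun i => rsum m (fun k => U i k * lam k * U i k))).
  - apply rsum_ext; intros; apply HA; auto.
  - rewrite rsum_swap. apply rsum_ext; intros k Hk.
    transitivity (lam k * rsum m (fun i => U i k * U i k)).
    + rewrite <- rsum_scal. apply rsum_ext; intros; ring.
    + rewrite HO by auto. rewrite Nat.eqb_refl. ring.
Qed.

Lemma jensen (f : R -> R) x d N (p t : nat -> R) :
  f 0 = 0 -> (forall y, 0 <= y -> f x + d * (y - x) <= f y) ->
  (forall l, (l < N)%nat -> 0 <= p l) -> (forall l, (l < N)%nat -> 0 <= t l) ->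
  rsum N (fun l => p l * t l) = x -> rsum N p <= 1 ->
  f x <= rsum N (fun l => p l * f (t l)).
Proof.
  intros f0 Ht Hp Htt Hx Hs.
  assert (H1 : rsum N (fun l => p l * (f x + d * (t l - x))) <= rsum N (fun l => p l * f (t l))).
  { apply rsum_le; intros l Hl. apply Rmult_le_compat_l; auto. }
  assert (H2 : rsum N (fun l => p l * (f x + d * (t l - x))) =
               rsum N p * (f x - d * x) + d * rsum N (fun l => p l * t l)).
  { rewrite <- rsum_scal_r, <- rsum_scal, <- rsum_plus. apply rsum_ext; intros; ring. }
  assert (H3 : f x + d * (0 - x) <= f 0) by (apply Ht; lra).
  assert (H4 : 0 <= rsum N p) by (apply rsum_nonneg; auto).
  rewrite Hx in H2. nra.
Qed.

Lemma ln_le_sub1 u : 0 < u -> ln u <= u - 1.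
Proof. intros Hu. pose proof (exp_ineq1_le (ln u)). rewrite exp_ln in H; lra. Qed.

Lemma tlnt_tangent x t : 0 < x -> 0 < t -> t - x <= t * (ln t - ln x).
Proof.
  intros Hx Ht. pose proof (ln_le_sub1 (x / t)) as H.
  assert (0 < x / t) by (apply Rdiv_lt_0_compat; auto).
  specialize (H H0). unfold Rdiv in H. rewrite ln_mult in H by (auto; apply Rinv_0_lt_compat; auto).
  rewrite ln_Rinv in H by auto.
  assert (t * (ln x + - ln t) <= t * (x * / t - 1)) by (apply Rmult_le_compat_l; lra).
  assert (t * (x * / t) = x) by (field; lra). nra.
Qed.

Lemma xlogx_tangent x : 0 < x -> forall t, 0 <= t -> xlogx x + (ln x + 1) * (t - x) <= xlogx t.
Proof.
  intros Hx t Ht. unfold xlogx.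
  destruct (Rlt_dec 0 x); [|lra].
  destruct (Rlt_dec 0 t).
  - pose proof (tlnt_tangent x t Hx r0). nra.
  - assert (t = 0) by lra. subst. lra.
Qed.

Lemma exp_tangent a b : exp a * (1 + (b - a)) <= exp b.
Proof.
  pose proof (exp_ineq1_le (b - a)).
  replace b with (a + (b - a)) at 2 by ring. rewrite exp_plus.
  pose proof (exp_pos a). nra.
Qed.

Lemma rpow_tangent (al x : R) : 1 <= al -> 0 < x ->
  forall t, 0 <= t -> rpow x al + al * Rpower x (al - 1) * (t - x) <= rpow t al.
Proof.
  intros Hal Hx t Ht. unfold rpow.
  destruct (Rlt_dec 0 x); [|lra].
  assert (Ex : Rpower x al = Rpower x (al - 1) * x).
  { replace al with ((al - 1) + 1) at 1 by ring. rewrite Rpower_plus, Rpower_1 by auto. ring. }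
  assert (Px : 0 < Rpower x (al - 1)) by (unfold Rpower; apply exp_pos).
  destruct (Rlt_dec 0 t).
  - (* t^al >= t x^(al-1) (1 + (al-1)(ln t - ln x)) *)
    pose proof (exp_tangent (ln t + (al - 1) * ln x) (al * ln t)) as H.
    assert (E1 : exp (ln t + (al - 1) * ln x) = t * Rpower x (al - 1)).
    { rewrite exp_plus, exp_ln by auto. unfold Rpower. reflexivity. }
    rewrite E1 in H. change (exp (al * ln t)) with (Rpower t al) in H.
    pose proof (tlnt_tangent x t Hx r0) as H2.
    assert (H3 : (al - 1) * (t - x) <= (al - 1) * (t * (ln t - ln x))) by (apply Rmult_le_compat_l; lra).
    rewrite Ex.
    assert (H4 : Rpower x (al - 1) * ((al - 1) * (t - x)) <= Rpower x (al - 1) * ((al - 1) * (t * (ln t - ln x))))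
      by (apply Rmult_le_compat_l; lra).
    nra.
  - assert (t = 0) by lra. subst. rewrite Ex.
    assert (0 <= Rpower x (al - 1) * x * (al - 1)) by (apply Rmult_le_pos; [apply Rmult_le_pos|]; lra). lra.
Qed.

Lemma dot_lincomb m (V : mat) h z :
  dot m (fun a => rsum m (fun l => h l * V a l)) z = rsum m (fun l => h l * dot m (col V l) z).
Proof.
  unfold dot, col.
  transitivity (rsum m (fun a => rsum m (fun l => h l * (V a l * z a)))).
  - apply rsum_ext; intros a Ha. rewrite <- rsum_scal_r. apply rsum_ext; intros; ring.
  - rewrite rsum_swap. apply rsum_ext; intros l Hl. rewrite <- rsum_scal. reflexivity.
Qed.

Lemma dot_minus m x y z : dot m (fun a => x a - y a) z = dot m x z - dot m y z.
Proof. unfold dot. rewrite <- rsum_minus. apply rsum_ext; intros; ring. Qed.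

Lemma dot_lincomb_orth m V h l' : orthogonal m V -> (l' < m)%nat ->
  rsum m (fun l => h l * dot m (col V l) (col V l')) = h l'.
Proof.
  intros HO Hl'. rewrite <- (rsum_delta' m h l' Hl').
  apply rsum_ext; intros l Hl. rewrite dot_orth by auto. reflexivity.
Qed.

Lemma Rdiv_nn a b : 0 <= a -> 0 < b -> 0 <= a / b.
Proof. intros. unfold Rdiv. apply Rmult_le_pos; [auto|left; apply Rinv_0_lt_compat; auto]. Qed.

Section Core.
Variables (n m : nat) (w : nat -> R) (rho : nat -> mat) (Us : nat -> mat)
  (lams : nat -> nat -> R) (V : mat) (s : nat -> R).
Hypothesis Hw : forall j, (j < n)%nat -> 0 <= w j.
Hypothesis HUs : forall j, (j < n)%nat -> spectral_decomp m (rho j) (Us j) (lams j).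
Hypothesis Hlam : forall j k, (j < n)%nat -> (k < m)%nat -> 0 <= lams j k.
Hypothesis HV : spectral_decomp m (mixture n w rho) V s.

Let sig := mixture n w rho.
Let g j k := w j * lams j k.
Let c j k l := (dot m (col (Us j) k) (col V l))^2.

Lemma g_nonneg j k : (j < n)%nat -> (k < m)%nat -> 0 <= g j k.
Proof. intros; unfold g; apply Rmult_le_pos; auto. Qed.

Lemma L1 y : quad m sig y = rsum n (fun j => rsum m (fun k => g j k * (dot m y (col (Us j) k))^2)).
Proof.
  unfold sig. rewrite quad_mixture. apply rsum_ext; intros j Hj.
  rewrite (quad_decomp _ _ _ _ _ (HUs j Hj)). rewrite <- rsum_scal.
  apply rsum_ext; intros; unfold g; ring.
Qed.

Lemma L2 y : quad m sig y = rsum m (fun l => s l * (dot m y (col V l))^2).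
Proof. apply quad_decomp; exact HV. Qed.

Lemma L3 y j k : (j < n)%nat -> (k < m)%nat -> g j k * (dot m y (col (Us j) k))^2 <= quad m sig y.
Proof.
  intros Hj Hk. rewrite L1.
  eapply Rle_trans; [| apply (rsum_ge_term n _ j)]; auto.
  - apply (rsum_ge_term m (fun k => g j k * (dot m y (col (Us j) k))^2) k); auto.
    intros; apply Rmult_le_pos; [apply g_nonneg; auto| apply pow2_ge_0].
  - intros; apply rsum_nonneg; intros; apply Rmult_le_pos; [apply g_nonneg; auto| apply pow2_ge_0].
Qed.

Lemma L4 l : (l < m)%nat -> s l = rsum n (fun j => rsum m (fun k => g j k * c j k l)).
Proof.
  intros Hl. rewrite <- (eigen_val _ _ _ _ _ HV Hl). fold sig. rewrite L1.
  apply rsum_ext; intros j Hj; apply rsum_ext; intros k Hk. unfold c. rewrite dot_sym. reflexivity.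
Qed.

Lemma L5 l : (l < m)%nat -> 0 <= s l.
Proof.
  intros Hl. rewrite L4 by auto. apply rsum_nonneg; intros j Hj; apply rsum_nonneg; intros k Hk.
  apply Rmult_le_pos; [apply g_nonneg; auto|unfold c; apply pow2_ge_0].
Qed.

Lemma L6 l j k : (l < m)%nat -> (j < n)%nat -> (k < m)%nat -> s l = 0 -> g j k * c j k l = 0.
Proof.
  intros Hl Hj Hk H0. rewrite L4 in H0 by auto.
  assert (Hn : forall j k, (j < n)%nat -> (k < m)%nat -> 0 <= g j k * c j k l).
  { intros; apply Rmult_le_pos; [apply g_nonneg; auto|unfold c; apply pow2_ge_0]. }
  assert (rsum m (fun k => g j k * c j k l) = 0).
  { apply (rsum_nonneg_eq0 n (fun j => rsum m (fun k => g j k * c j k l))); auto.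
    intros; apply rsum_nonneg; auto. }
  apply (rsum_nonneg_eq0 m (fun k => g j k * c j k l)); auto.
Qed.

Lemma unit_col j k : (j < n)%nat -> (k < m)%nat -> dot m (col (Us j) k) (col (Us j) k) = 1.
Proof. intros Hj Hk. rewrite dot_orth by (auto; apply (HUs j Hj)). rewrite Nat.eqb_refl. reflexivity. Qed.

Lemma L7 j k : (j < n)%nat -> (k < m)%nat -> 0 < g j k -> rsum m (fun l => c j k l) = 1.
Proof.
  intros Hj Hk Hg. destruct HV as [HO _].
  set (u := col (Us j) k).
  set (r := fun a => u a - rsum m (fun l => dot m u (col V l) * V a l)).
  assert (Hr : forall l', (l' < m)%nat -> dot m r (col V l') = 0).
  { intros l' Hl'. unfold r. rewrite dot_minus, dot_lincomb, dot_lincomb_orth by auto. ring. }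
  assert (Hq : quad m sig r = 0).
  { rewrite L2. apply rsum_zero; intros l Hl. rewrite Hr by auto. ring. }
  pose proof (L3 r j k Hj Hk) as H3. rewrite Hq in H3. fold u in H3.
  assert (Hru : dot m r u = 0).
  { assert (0 <= (dot m r u)^2) by apply pow2_ge_0.
    assert ((dot m r u)^2 = 0) by nra.
    apply Rsqr_0_uniq; unfold Rsqr; nra. }
  unfold r in Hru. rewrite dot_minus, dot_lincomb in Hru. unfold u in Hru.
  rewrite unit_col in Hru by auto.
  assert (E : rsum m (fun l => c j k l) =
              rsum m (fun l => dot m (col (Us j) k) (col V l) * dot m (col V l) (col (Us j) k))).
  { apply rsum_ext; intros; unfold c; rewrite (dot_sym m (col V _)); ring. }
  lra.
Qed.

Let Pp j k := rsum m (fun l => if Rlt_dec 0 (s l) then c j k l / s l else 0).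

Lemma Pp_nonneg j k : 0 <= Pp j k.
Proof.
  unfold Pp. apply rsum_nonneg; intros l Hl. destruct (Rlt_dec 0 (s l)); [|lra].
  apply Rdiv_nn; [unfold c; apply pow2_ge_0|auto].
Qed.

Lemma L8 j k : (j < n)%nat -> (k < m)%nat -> 0 < g j k -> g j k * Pp j k <= 1.
Proof.
  intros Hj Hk Hg. pose proof HV as [HO _].
  set (u := col (Us j) k).
  set (h := fun l => if Rlt_dec 0 (s l) then dot m u (col V l) / s l else 0).
  set (y := fun a => rsum m (fun l => h l * V a l)).
  assert (Hy : forall l', (l' < m)%nat -> dot m y (col V l') = h l').
  { intros l' Hl'. unfold y. rewrite dot_lincomb, dot_lincomb_orth by auto. reflexivity. }
  assert (Hq : quad m sig y = Pp j k).
  { rewrite L2. unfold Pp. apply rsum_ext; intros l Hl. rewrite Hy by auto. unfold h, c.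
    fold u. destruct (Rlt_dec 0 (s l)); [field; lra|ring]. }
  assert (Hyu : dot m y u = Pp j k).
  { unfold y. rewrite dot_lincomb. unfold Pp. apply rsum_ext; intros l Hl. unfold h, c.
    fold u. rewrite (dot_sym m (col V l) u). destruct (Rlt_dec 0 (s l)); [field; lra|ring]. }
  pose proof (L3 y j k Hj Hk) as H3. fold u in H3. rewrite Hq, Hyu in H3.
  pose proof (Pp_nonneg j k).
  destruct (Req_dec (Pp j k) 0) as [E|E]; [rewrite E; lra|].
  assert (0 < Pp j k) by lra.
  assert (g j k * Pp j k * Pp j k <= 1 * Pp j k) by nra.
  apply (Rmult_le_reg_r (Pp j k)); auto.
Qed.

Variable f : R -> R.
Hypothesis f0 : f 0 = 0.
Hypothesis ftan : forall x, 0 < x -> exists d, forall t, 0 <= t -> f x + d * (t - x) <= f t.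

Let p j k l := if Rlt_dec 0 (s l) then g j k * c j k l / s l else 0.

Lemma JK j k : (j < n)%nat -> (k < m)%nat -> f (g j k) <= rsum m (fun l => p j k l * f (s l)).
Proof.
  intros Hj Hk. pose proof (g_nonneg j k Hj Hk) as Hg0.
  destruct (Req_dec (g j k) 0) as [E|E].
  - rewrite E, f0. rewrite rsum_zero; [lra|]. intros l Hl. unfold p. rewrite E.
    destruct (Rlt_dec 0 (s l)); [unfold Rdiv; ring|ring].
  - assert (Hg : 0 < g j k) by lra.
    destruct (ftan (g j k) Hg) as [d Hd].
    apply (jensen f (g j k) d); auto.
    + intros l Hl. unfold p. destruct (Rlt_dec 0 (s l)); [|lra].
      apply Rdiv_nn; [apply Rmult_le_pos; [lra|unfold c; apply pow2_ge_0]|auto].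
    + intros l Hl; apply L5; auto.
    + transitivity (g j k * rsum m (fun l => c j k l)); [|rewrite L7 by auto; ring].
      rewrite <- rsum_scal. apply rsum_ext; intros l Hl. unfold p.
      destruct (Rlt_dec 0 (s l)); [field; lra|].
      assert (s l = 0) by (pose proof (L5 l Hl); lra).
      pose proof (L6 l j k Hl Hj Hk H). lra.
    + eapply Rle_trans; [|apply (L8 j k Hj Hk Hg)].
      right. unfold Pp. rewrite <- rsum_scal. apply rsum_ext; intros l Hl. unfold p.
      destruct (Rlt_dec 0 (s l)); [field; lra|ring].
Qed.

Lemma core_ineq : rsum n (fun j => rsum m (fun k => f (g j k))) <= rsum m (fun l => f (s l)).
Proof.
  eapply Rle_trans.
  { apply rsum_le; intros j Hj; apply rsum_le; intros k Hk; apply (JK j k Hj Hk). }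
  right.
  transitivity (rsum n (fun j => rsum m (fun l => rsum m (fun k => p j k l * f (s l))))).
  { apply rsum_ext; intros; apply rsum_swap. }
  rewrite rsum_swap. apply rsum_ext; intros l Hl.
  rewrite rsum_swap.
  transitivity (rsum m (fun k => rsum n (fun j => p j k l)) * f (s l)).
  { rewrite <- rsum_scal_r. apply rsum_ext; intros k Hk. rewrite <- rsum_scal_r. reflexivity. }
  unfold p. destruct (Rlt_dec 0 (s l)).
  - rewrite rsum_swap.
    transitivity ((rsum n (fun j => rsum m (fun k => g j k * c j k l))) / s l * f (s l)).
    + f_equal. unfold Rdiv. rewrite <- rsum_scal_r. apply rsum_ext; intros.
      rewrite <- rsum_scal_r. reflexivity.
    + rewrite <- L4 by auto. field. lra.
  - assert (s l = 0) by (pose proof (L5 l Hl); lra). rewrite H, f0. ring.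
Qed.
End Core.

Definition spectral_exists := MC.spectral_exists.

Lemma trace_fun_spec m f A : Defs.symmetric m A ->
  exists U lam, spectral_decomp m A U lam /\ trace_fun m f A = rsum m (fun k => f (lam k)).
Proof.
  intros HA. destruct (spectral_exists m A HA) as [U [lam HD]].
  unfold trace_fun.
  apply (epsilon_spec (inhabits 0) (fun t => exists U lam, spectral_decomp m A U lam /\ t = rsum m (fun k => f (lam k)))).
  exists (rsum m (fun k => f (lam k))), U, lam. auto.
Qed.

Lemma choose_decomps n m f (rho : nat -> mat) : (forall j, (j < n)%nat -> Defs.symmetric m (rho j)) ->
  exists Us lams, forall j, (j < n)%nat ->
    spectral_decomp m (rho j) (Us j) (lams j) /\ trace_fun m f (rho j) = rsum m (fun k => f (lams j k)).
Proof.
  intros Hs.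
  set (P := fun j (p : mat * (nat -> R)) => (j < n)%nat ->
    spectral_decomp m (rho j) (fst p) (snd p) /\ trace_fun m f (rho j) = rsum m (fun k => f (snd p k))).
  set (F := fun j => epsilon (inhabits ((fun _ _ => 0), (fun _ => 0)) : inhabited (mat * (nat -> R))) (P j)).
  exists (fun j => fst (F j)), (fun j => snd (F j)).
  intros j Hj.
  apply (epsilon_spec (inhabits ((fun _ _ => 0), (fun _ => 0)) : inhabited (mat * (nat -> R))) (P j)); auto.
  destruct (trace_fun_spec m f (rho j) (Hs j Hj)) as [U [lam [HD HT]]].
  exists (U, lam). intros _. simpl. auto.
Qed.

Lemma mixture_sym n m w rho : (forall j, (j < n)%nat -> Defs.symmetric m (rho j)) ->
  Defs.symmetric m (mixture n w rho).
Proof.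
  intros H i j Hi Hj. unfold mixture. apply rsum_ext; intros k Hk. rewrite H; auto.
Qed.

Lemma rpow_mult a b al : 0 <= a -> 0 <= b -> rpow (a * b) al = rpow a al * rpow b al.
Proof.
  intros Ha Hb. unfold rpow.
  destruct (Rlt_dec 0 a); destruct (Rlt_dec 0 b); destruct (Rlt_dec 0 (a * b)).
  - symmetry; apply Rpower_mult_distr; auto.
  - exfalso; apply n; apply Rmult_lt_0_compat; auto.
  - assert (b = 0) by lra; subst; rewrite Rmult_0_r in r0; lra.
  - ring.
  - assert (a = 0) by lra; subst; rewrite Rmult_0_l in r0; lra.
  - ring.
  - assert (a = 0) by lra; subst; rewrite Rmult_0_l in r; lra.
  - ring.
Qed.

Lemma xlogx_mult a b : 0 <= a -> 0 <= b -> xlogx (a * b) = a * xlogx b + b * xlogx a.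
Proof.
  intros Ha Hb. unfold xlogx.
  destruct (Rlt_dec 0 a); destruct (Rlt_dec 0 b); destruct (Rlt_dec 0 (a * b)).
  - rewrite ln_mult by auto. ring.
  - exfalso; apply n; apply Rmult_lt_0_compat; auto.
  - assert (b = 0) by lra; subst; rewrite Rmult_0_r in r0; lra.
  - assert (b = 0) by lra; subst; ring.
  - assert (a = 0) by lra; subst; rewrite Rmult_0_l in r0; lra.
  - assert (a = 0) by lra; subst; ring.
  - assert (a = 0) by lra; subst; rewrite Rmult_0_l in r; lra.
  - assert (a = 0) by lra; subst; ring.
Qed.

Lemma rpow_le_self x al : 1 <= al -> 0 <= x <= 1 -> rpow x al <= x.
Proof.
  intros Hal Hx. unfold rpow. destruct (Rlt_dec 0 x); [|lra].
  replace al with ((al - 1) + 1) at 1 by ring. rewrite Rpower_plus, Rpower_1 by auto.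
  assert (Rpower x (al - 1) <= 1).
  { unfold Rpower. apply Rle_trans with (exp 0); [|rewrite exp_0; lra].
    pose proof (ln_le_sub1 x r).
    destruct (Req_dec ((al - 1) * ln x) 0) as [E|E]; [rewrite E; right; reflexivity|].
    left; apply exp_increasing. nra. }
  nra.
Qed.

Lemma rpow_nonneg x al : 0 <= rpow x al.
Proof. unfold rpow. destruct (Rlt_dec 0 x); [left; unfold Rpower; apply exp_pos|lra]. Qed.

Theorem proposition4 (alpha : R) (n m : nat) (w : nat -> R) (rho : nat -> mat) :
  1 <= alpha <= 2 -> (1 <= n)%nat -> (1 <= m)%nat ->
  (forall j, (j < n)%nat -> 0 <= w j) -> rsum n w = 1 ->
  (forall j, (j < n)%nat -> density m (rho j)) ->
  jt_div alpha n m w rho <= tsallis_vec alpha n w.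
Proof.
  intros Hal Hn Hm Hw Hsw Hd.
  assert (Hsym : forall j, (j < n)%nat -> Defs.symmetric m (rho j)) by (intros j Hj; apply Hd; auto).
  assert (Hw1 : forall j, (j < n)%nat -> w j <= 1).
  { intros j Hj. rewrite <- Hsw. apply (rsum_ge_term n w j); auto. }
  unfold jt_div, tsallis_mat, tsallis_vec.
  destruct (Req_dec_T alpha 1) as [Ea|Ea].
  -
    destruct (trace_fun_spec m xlogx (mixture n w rho) (mixture_sym n m w rho Hsym)) as [V [s [HV HTs]]].
    destruct (choose_decomps n m xlogx rho Hsym) as [Us [lams HU]].
    assert (HUd : forall j, (j < n)%nat -> spectral_decomp m (rho j) (Us j) (lams j)) by (intros; apply HU; auto).
    assert (Hlam : forall j k, (j < n)%nat -> (k < m)%nat -> 0 <= lams j k).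
    { intros j k Hj Hk. apply (eigen_nonneg m (rho j) (Us j) (lams j)); auto. apply Hd; auto. }
    assert (Hsl : forall j, (j < n)%nat -> rsum m (lams j) = 1).
    { intros j Hj. rewrite <- (trace_decomp m (rho j) (Us j)); auto. apply Hd; auto. }
    pose proof (core_ineq n m w rho Us lams V s Hw HUd Hlam HV xlogx) as HC.
    assert (f0 : xlogx 0 = 0) by (unfold xlogx; destruct (Rlt_dec 0 0); lra).
    specialize (HC f0).
    assert (ftan : forall x, 0 < x -> exists d, forall t, 0 <= t -> xlogx x + d * (t - x) <= xlogx t).
    { intros x Hx. exists (ln x + 1). apply xlogx_tangent; auto. }
    specialize (HC ftan). simpl in HC.
    rewrite HTs.
    assert (E : rsum n (fun j => rsum m (fun k => xlogx (w j * lams j k))) =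
                rsum n (fun j => w j * trace_fun m xlogx (rho j)) + rsum n (fun j => xlogx (w j))).
    { rewrite <- rsum_plus. apply rsum_ext; intros j Hj.
      destruct (HU j Hj) as [_ HT]. rewrite HT.
      transitivity (rsum m (fun k => w j * xlogx (lams j k) + lams j k * xlogx (w j))).
      - apply rsum_ext; intros k Hk. apply xlogx_mult; auto.
      - rewrite rsum_plus, rsum_scal, rsum_scal_r, Hsl by auto. ring. }
    rewrite E in HC.
    assert (E2 : rsum n (fun j => w j * - trace_fun m xlogx (rho j)) = - rsum n (fun j => w j * trace_fun m xlogx (rho j))).
    { rewrite <- (Rmult_1_l (rsum n (fun j => w j * trace_fun m xlogx (rho j)))).
      rewrite Ropp_mult_distr_l, <- rsum_scal.
      apply rsum_ext; intros; ring. }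
    rewrite E2. lra.
  -
    assert (Hal1 : 1 < alpha) by lra.
    set (f := fun x => rpow x alpha).
    destruct (trace_fun_spec m f (mixture n w rho) (mixture_sym n m w rho Hsym)) as [V [s [HV HTs]]].
    destruct (choose_decomps n m f rho Hsym) as [Us [lams HU]].
    assert (HUd : forall j, (j < n)%nat -> spectral_decomp m (rho j) (Us j) (lams j)) by (intros; apply HU; auto).
    assert (Hlam : forall j k, (j < n)%nat -> (k < m)%nat -> 0 <= lams j k).
    { intros j k Hj Hk. apply (eigen_nonneg m (rho j) (Us j) (lams j)); auto. apply Hd; auto. }
    assert (Hsl : forall j, (j < n)%nat -> rsum m (lams j) = 1).
    { intros j Hj. rewrite <- (trace_decomp m (rho j) (Us j)); auto. apply Hd; auto. }
    pose proof (core_ineq n m w rho Us lams V s Hw HUd Hlam HV f) as HC.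
    assert (f0 : f 0 = 0) by (unfold f, rpow; destruct (Rlt_dec 0 0); lra).
    specialize (HC f0).
    assert (ftan : forall x, 0 < x -> exists d, forall t, 0 <= t -> f x + d * (t - x) <= f t).
    { intros x Hx. exists (alpha * Rpower x (alpha - 1)). apply rpow_tangent; auto; lra. }
    specialize (HC ftan). simpl in HC.
    set (T := fun j => trace_fun m f (rho j)).
    assert (E : rsum n (fun j => rsum m (fun k => f (w j * lams j k))) = rsum n (fun j => rpow (w j) alpha * T j)).
    { apply rsum_ext; intros j Hj. unfold T. destruct (HU j Hj) as [_ HT]. rewrite HT.
      rewrite <- rsum_scal. apply rsum_ext; intros k Hk. unfold f. apply rpow_mult; auto. }
    rewrite E in HC.
    assert (HT1 : forall j, (j < n)%nat -> T j <= 1).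
    { intros j Hj. unfold T. destruct (HU j Hj) as [_ HT]. rewrite HT. rewrite <- (Hsl j Hj).
      apply rsum_le; intros k Hk. unfold f. apply rpow_le_self; [lra|]. split; auto.
      rewrite <- (Hsl j Hj). apply (rsum_ge_term m (lams j) k); auto. }
    assert (Key : 0 <= rsum n (fun j => (rpow (w j) alpha - w j) * (T j - 1))).
    { apply rsum_nonneg; intros j Hj.
      pose proof (rpow_le_self (w j) alpha ltac:(lra) (conj (Hw j Hj) (Hw1 j Hj))).
      pose proof (HT1 j Hj). nra. }
    assert (EK : rsum n (fun j => (rpow (w j) alpha - w j) * (T j - 1)) =
                 rsum n (fun j => rpow (w j) alpha * T j) - rsum n (fun j => w j * T j)
                 - rsum n (fun j => rpow (w j) alpha) + rsum n w).
    { rewrite <- !rsum_minus, <- rsum_plus. apply rsum_ext; intros; ring. }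
    fold f. rewrite HTs.
    assert (ER : rsum n (fun j => w j * ((T j - 1) / (1 - alpha))) =
                 (rsum n (fun j => w j * T j) - 1) / (1 - alpha)).
    { transitivity ((rsum n (fun j => w j * T j) - rsum n w) / (1 - alpha)); [|rewrite Hsw; reflexivity].
      unfold Rdiv. rewrite <- rsum_minus, <- rsum_scal_r.
      apply rsum_ext; intros; ring. }
    unfold T in ER. rewrite ER.
    assert (HK : / (1 - alpha) < 0) by (apply Rinv_lt_0_compat; lra).
    unfold Rdiv. rewrite Hsw in EK. fold T.
    set (S1 := rsum m (fun k => f (s k))) in *.
    set (S2 := rsum n (fun j => w j * T j)) in *.
    set (S3 := rsum n (fun j => rpow (w j) alpha)) in *.
    set (S4 := rsum n (fun j => rpow (w j) alpha * T j)) in *.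
    change (rsum n (fun j => w j * trace_fun m f (rho j))) with S2.
    assert (0 <= S1 - S2 - S3 + 1) by lra.
    set (K := / (1 - alpha)) in *. nra.
Qed.
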